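(* Let $a$ be a strongly regular scale factor (extended evenly to negative arguments) such that either (i) $\dot a(0^+)=0$ and there is $\epsilon>0$ with $\ddot a(t)\ge0$ on $(0,\epsilon)$, or (ii) $\infty>\dot a(0^+)>0$, and such that $\left|\frac{\dddot a(t)a^2(t)}{\dot a^3(t)}\right|\le C$ for all $t>0$ and some constant $C>0$. Consider the two-dimensional extended spacetime with coordinates $(\tau,\rho)$, $\tau>0$, $|\rho|<\rho_{\max}(\tau)$, and metric $ds^2=g_{\tau\tau}(\tau,\rho)\,d\tau^2+d\rho^2$. Then the cosmological-time-zero set $\mathcal M^0=\{(\tau,\pm\rho_{\mathcal M_\tau}):\tau>0\}$ is lightlike: for every $\tau>0$ the tangent vector $u=(1,\pm\frac{d\rho_{\mathcal M_\tau}}{d\tau})$ to $\mathcal M^0$ at $(\tau,\pm\rho_{\mathcal M_\tau})$ satisfies $g(u,u)=g_{\tau\tau}(\tau,\rho_{\mathcal M_\tau})+\left(\frac{d\rho_{\mathcal M_\tau}}{d\tau}\right)^2=0$.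
   Context: A function $a:[0,\infty)\to[0,\infty)$ is a regular scale factor if: (a) $a(0)=0$; (b) $a$ is increasing and continuous on $[0,\infty)$, twice continuously differentiable on $(0,\infty)$, with an inverse function on $[0,\infty)$; (c) $\frac{a(t)\ddot a(t)}{\dot a(t)^2}\le1$ for all $t>0$ (presupposing $\dot a(t)\ne0$). It is strongly regular if also $\frac{a\ddot a}{\dot a^2}\ge-K$ on $(0,\infty)$ for a constant $K\ge1$. $\dot a(0^+)=\lim_{t\to0^+}\dot a(t)$. Extend $a$ by $a(-t)=a(t)$. The original spacetime is the two-dimensional Robertson–Walker spacetime $ds^2=-dt^2+a^2(t)d\chi^2$, $t>0$; $(\tau,\rho)$ are Fermi coordinates of the comoving observer at $\chi=0$ ($\tau$ proper time, $\rho$ proper distance along orthogonal spacelike geodesics). For $\tau>0$, $\rho_{\mathcal M_\tau}=\int_0^\tau\frac{a(t)}{\sqrt{a^2(\tau)-a^2(t)}}dt$. For $\tau>0$ and $|\rho|<2\rho_{\mathcal M_\tau}$, $t_0(\tau,\rho)$ is the unique $t_0\in(-\tau,\tau)$ with $|\rho|=\int_{t_0}^\tau\frac{a(t)}{\sqrt{a^2(\tau)-a^2(t)}}dt$ (the cosmological time of the point; $t_0=0$ iff $|\rho|=\rho_{\mathcal M_\tau}$). For $0\le t_0<\tau$, $f(\tau,t_0)=\int_{t_0}^{\tau}\frac{\ddot a(t)}{\dot a(t)^2}\left(\frac{\sqrt{a^2(\tau)-a^2(t_0)}}{\sqrt{a^2(\tau)-a^2(t)}}-1\right)dt$; for $-\tau<t_0<0$,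 $f(\tau,t_0)=2f(\tau,0)-f(\tau,-t_0)$. Then $g_{\tau\tau}(\tau,\rho)=-[1-\dot a(\tau)f(\tau,t_0(\tau,\rho))]^2$. Finally $\rho_{\max}(\tau)=\inf\{\rho:0<\rho<2\rho_{\mathcal M_\tau},\ g_{\tau\tau}(\tau,\rho)=0\}$ if this set is nonempty, and $\rho_{\max}(\tau)=2\rho_{\mathcal M_\tau}$ otherwise. *)

(* Defs.v *)
From Stdlib Require Import Reals ClassicalEpsilon.
From Coquelicot Require Import Coquelicot.
Open Scope R_scope.

Definition da (a : R -> R) : R -> R := Derive a.
Definition dda (a : R -> R) : R -> R := Derive_n a 2.
Definition ddda (a : R -> R) : R -> R := Derive_n a 3.

Definition impint (h : R -> R) (lo hi : R) : R :=
  RInt_gen h (at_right lo) (at_left hi).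

Definition regular_scale_factor (a : R -> R) : Prop :=
  a 0 = 0 /\
  (forall s t, 0 <= s -> s < t -> a s < a t) /\
  (forall t, 0 <= t -> continuous a t) /\
  (forall t, 0 < t ->
     ex_derive a t /\ ex_derive (Derive a) t /\ continuous (Derive_n a 2) t) /\
  (forall t, 0 < t -> da a t <> 0 /\
     a t * dda a t / (da a t) ^ 2 <= 1).

Definition strongly_regular_scale_factor (a : R -> R) : Prop :=
  regular_scale_factor a /\
  exists K, 1 <= K /\ forall t, 0 < t -> - K <= a t * dda a t / (da a t) ^ 2.

Definition rhoM (a : R -> R) (tau : R) : R :=
  impint (fun t => a t / sqrt (a tau ^ 2 - a t ^ 2)) 0 tau.

Definition t0 (a : R -> R) (tau rho : R) : R :=
  epsilon (inhabits 0)
    (fun s => - tau < s < tau /\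
       Rabs rho = impint (fun t => a t / sqrt (a tau ^ 2 - a t ^ 2)) s tau).

Definition fpos (a : R -> R) (tau s : R) : R :=
  impint (fun t => dda a t / (da a t) ^ 2 *
            (sqrt (a tau ^ 2 - a s ^ 2) / sqrt (a tau ^ 2 - a t ^ 2) - 1)) s tau.

Definition ffun (a : R -> R) (tau s : R) : R :=
  if Rle_dec 0 s then fpos a tau s else 2 * fpos a tau 0 - fpos a tau (- s).

Definition gtt (a : R -> R) (tau rho : R) : R :=
  - (1 - da a tau * ffun a tau (t0 a tau rho)) ^ 2.

(* Main.v *)
Require Import Defs.
From Stdlib Require Import Reals Lra ClassicalEpsilon Ranalysis5.
From Coquelicot Require Import Coquelicot.
Open Scope R_scope.

Lemma ballR x e y : ball x e y <-> Rabs (y - x) < e.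
Proof. split; intro H; exact H. Qed.

Lemma c2c f x : continuity_pt f x -> continuous f x.
Proof. intro H; apply continuity_pt_filterlim; exact H. Qed.
Lemma c2p f x : continuous f x -> continuity_pt f x.
Proof. intro H; apply continuity_pt_filterlim; exact H. Qed.

Lemma der_cont (f : R -> R) x l : is_derive f x l -> continuity_pt f x.
Proof.
  intro H. apply c2p. apply (@ex_derive_continuous R_AbsRing R_NormedModule f). exists l; exact H.
Qed.

Lemma cmul (f g : R -> R) x : continuous f x -> continuous g x -> continuous (fun y => f y * g y) x.
Proof. intros; apply (continuous_mult f g); auto. Qed.
Lemma cplus (f g : R -> R) x : continuous f x -> continuous g x -> continuous (fun y => f y + g y) x.
Proof. intros; apply (continuous_plus f g); auto. Qed.
Lemma copp (f : R -> R) x : continuous f x -> continuous (fun y => - f y) x.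
Proof. intros; apply (continuous_opp f); auto. Qed.
Lemma cminus (f g : R -> R) x : continuous f x -> continuous g x -> continuous (fun y => f y - g y) x.
Proof. intros; apply cplus; auto; apply copp; auto. Qed.
Lemma cinv (f : R -> R) x : continuous f x -> f x <> 0 -> continuous (fun y => / f y) x.
Proof. intros; apply (continuous_Rinv_comp f); auto. Qed.
Lemma cdiv (f g : R -> R) x : continuous f x -> continuous g x -> g x <> 0 -> continuous (fun y => f y / g y) x.
Proof. intros; apply cmul; auto; apply cinv; auto. Qed.
Lemma cconst (c : R) (x : R) : continuous (fun _ : R => c) x.
Proof. apply continuous_const. Qed.
Lemma cid x : continuous (fun y : R => y) x.
Proof. apply continuous_id. Qed.
Lemma ccomp (f g : R -> R) x : continuous f x -> continuous g (f x) -> continuous (fun y => g (f y)) x.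
Proof. intros; apply (continuous_comp f g); auto. Qed.
Lemma cpow (f : R -> R) n x : continuous f x -> continuous (fun y => f y ^ n) x.
Proof. intros H; induction n; simpl. apply cconst. apply cmul; auto. Qed.

Lemma loc_intro x (P : R -> Prop) d : 0 < d -> (forall y, Rabs (y - x) < d -> P y) -> locally x P.
Proof. intros hd H. exists (mkposreal d hd). intros y hy. apply H. apply ballR in hy. exact hy. Qed.

Lemma sin_lt_inv x y : - (PI/2) <= x <= PI/2 -> - (PI/2) <= y <= PI/2 -> sin x < sin y -> x < y.
Proof.
  intros hx hy h. destruct (Rlt_le_dec x y) as [h'|h']; auto.
  destruct h' as [h'|h']. assert (sin y < sin x) by (apply sin_increasing_1; lra). lra.
  subst; lra.
Qed.

Lemma sin_le_mono x y : - (PI/2) <= x <= PI/2 -> - (PI/2) <= y <= PI/2 -> x <= y -> sin x <= sin y.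
Proof.
  intros hx hy h. destruct h as [h|h]. left; apply sin_increasing_1; lra. subst; lra.
Qed.

Lemma PI2_pos : 0 < PI / 2.
Proof. assert (h := PI_RGT_0). lra. Qed.

Lemma exRc (f : R -> R) x y : (forall z, Rmin x y <= z <= Rmax x y -> continuous f z) -> ex_RInt f x y.
Proof. intro H. apply (@ex_RInt_continuous R_CompleteNormedModule). exact H. Qed.

Lemma RIc (f : R -> R) x y : ex_RInt f x y -> is_RInt f x y (RInt f x y).
Proof. intro H. apply (@RInt_correct R_CompleteNormedModule). exact H. Qed.
Lemma RIu (f : R -> R) x y l : is_RInt f x y l -> RInt f x y = l.
Proof. intro H. apply (@is_RInt_unique R_CompleteNormedModule). exact H. Qed.

Lemma AL (f G : R -> R) s tau L : s < tau ->
 (forall x y, s < x <= y -> y < tau -> is_RInt f x y (G y - G x)) ->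
 filterlim G (at_right s) (locally (G s)) ->
 filterlim G (at_left tau) (locally L) ->
 is_RInt_gen f (at_right s) (at_left tau) (L - G s).
Proof.
  intros hst hI h1 h2 P HP.
  destruct HP as [eps HP].
  set (m := (s + tau) / 2).
  assert (he : 0 < eps / 2) by (destruct eps; simpl; lra).
  assert (A1 := proj1 (filterlim_locally (F := at_right s) G (G s)) h1 (mkposreal _ he)).
  assert (A2 := proj1 (filterlim_locally (F := at_left tau) G L) h2 (mkposreal _ he)).
  assert (B1 : at_right s (fun x => x < m)).
  { apply (loc_intro s _ (m - s)). unfold m; lra. intros y hy _. apply Rabs_lt_between' in hy. lra. }
  assert (B2 : at_left tau (fun x => m < x)).
  { apply (loc_intro tau _ (tau - m)). unfold m; lra. intros y hy _. apply Rabs_lt_between' in hy. lra. }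
  assert (C1 : at_right s (fun x => s < x)).
  { apply (loc_intro s _ 1). lra. intros y hy h. exact h. }
  assert (C2 : at_left tau (fun x => x < tau)).
  { apply (loc_intro tau _ 1). lra. intros y hy h. exact h. }
  apply Filter_prod with
    (fun x => ball (G s) (eps/2) (G x) /\ x < m /\ s < x)
    (fun y => ball L (eps/2) (G y) /\ m < y /\ y < tau).
  - apply filter_and; auto. apply filter_and; auto.
  - apply filter_and; auto. apply filter_and; auto.
  - intros x y [hx1 [hx2 hx3]] [hy1 [hy2 hy3]]. simpl.
    exists (G y - G x). split. apply hI; unfold m in *; lra.
    apply HP. apply ballR. apply ballR in hx1. apply ballR in hy1.
    apply Rabs_lt_between' in hx1. apply Rabs_lt_between' in hy1.
    apply Rabs_lt_between'. simpl in *. lra.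
Qed.

Lemma cont_at0 (Phi Psi : R -> R) : Phi 0 = 0 -> continuous Psi 0 -> Psi 0 = 0 ->
  (forall th, -1 < th < 0 -> Phi th = Psi th) ->
  (forall eps, 0 < eps -> exists d, 0 < d /\ (forall th, 0 < th < d -> Rabs (Phi th) < eps)) ->
  continuous Phi 0.
Proof.
  intros h0 hc hp0 hl hr. apply filterlim_locally. intro eps.
  destruct (hr eps (cond_pos eps)) as [d [hd H]].
  assert (hc1 := proj1 (filterlim_locally (F := locally 0) Psi (Psi 0)) hc eps).
  destruct hc1 as [d2 hd2].
  apply (loc_intro 0 _ (Rmin 1 (Rmin d d2))).
  apply Rmin_glb_lt; try lra. apply Rmin_glb_lt; auto. apply cond_pos.
  intros y hy. apply ballR. rewrite h0, Rminus_0_r.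
  assert (Rmin 1 (Rmin d d2) <= 1) by apply Rmin_l.
  assert (Rmin 1 (Rmin d d2) <= d) by (eapply Rle_trans; [apply Rmin_r|apply Rmin_l]).
  assert (Rmin 1 (Rmin d d2) <= d2) by (eapply Rle_trans; [apply Rmin_r|apply Rmin_r]).
  apply Rabs_lt_between' in hy.
  destruct (Rtotal_order y 0) as [h|[h|h]].
  - rewrite hl by lra.
    assert (h3 : ball (Psi 0) eps (Psi y)) by (apply hd2; apply ballR; apply Rabs_lt_between'; lra).
    rewrite hp0 in h3. apply (proj1 (ballR _ _ _)) in h3. rewrite Rminus_0_r in h3. exact h3.
  - subst. rewrite h0, Rabs_R0. apply cond_pos.
  - apply H. lra.
Qed.

Lemma locally_sin_neg th : sin th < 0 -> locally th (fun t => sin t < 0).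
Proof.
  intro h. assert (hc : filterlim sin (locally th) (locally (sin th))) by apply continuous_sin.
  assert (hc1 := proj1 (filterlim_locally (F := locally th) sin (sin th)) hc (mkposreal (- sin th) ltac:(lra))).
  eapply filter_imp; [|exact hc1]. intros t ht. apply ballR in ht. simpl in ht.
  apply Rabs_lt_between' in ht. lra.
Qed.

Lemma right_of_cont (f : R -> R) x : continuous f x -> filterlim f (at_right x) (locally (f x)).
Proof. intro H. apply (filterlim_filter_le_1 (F := locally x)). apply filter_le_within. exact H. Qed.
Lemma left_of_cont (f : R -> R) x : continuous f x -> filterlim f (at_left x) (locally (f x)).
Proof. intro H. apply (filterlim_filter_le_1 (F := locally x)). apply filter_le_within. exact H. Qed.

Lemma der_eq (f : R -> R) x l1 l2 : is_derive f x l1 -> l1 = l2 -> is_derive f x l2.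
Proof. intros H e; subst; exact H. Qed.

Lemma RCh (f : R -> R) x y z : ex_RInt f x y -> ex_RInt f y z -> RInt f x y + RInt f y z = RInt f x z.
Proof. intros. apply (@RInt_Chasles R_CompleteNormedModule); auto. Qed.
Lemma Rpt (f : R -> R) x : RInt f x x = 0.
Proof. apply (@RInt_point R_CompleteNormedModule). Qed.

Lemma sqrt_cos A th : 0 < A -> 0 <= cos th -> sqrt (A ^ 2 - (A * sin th) ^ 2) = A * cos th.
Proof.
  intros hA hc. replace (A ^ 2 - (A * sin th) ^ 2) with ((A * cos th) ^ 2).
  apply sqrt_pow2. apply Rmult_le_pos; lra.
  assert (h := sin2_cos2 th). unfold Rsqr in h. simpl. nra.
Qed.

Lemma isR_eq (f : R -> R) x y (l1 l2 : R) : is_RInt f x y l1 -> l1 = l2 -> is_RInt f x y l2.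
Proof. intros H e; subst; exact H. Qed.

Lemma Rsimp2 (A B : R) : B = A + B - A.
Proof. ring. Qed.

Lemma RGu (f : R -> R) s t l : is_RInt_gen f (at_right s) (at_left t) l ->
  RInt_gen f (at_right s) (at_left t) = l.
Proof. intro H. apply (@is_RInt_gen_unique R_CompleteNormedModule); auto; apply Proper_StrongProper; apply at_right_proper_filter || apply at_left_proper_filter. Qed.

Section Main.
Variable a : R -> R.
Hypothesis Ha0 : a 0 = 0.
Hypothesis Hinc : forall s t, 0 <= s -> s < t -> a s < a t.
Hypothesis Hcont0 : forall t, 0 <= t -> continuous a t.
Hypothesis Hev : forall t, a (- t) = a t.
Hypothesis Hd : forall t, 0 < t -> ex_derive a t.
Hypothesis Hdd : forall t, 0 < t -> ex_derive (Derive a) t.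
Hypothesis Hc2 : forall t, 0 < t -> continuous (Derive_n a 2) t.
Hypothesis Hdpos : forall t, 0 < t -> 0 < Derive a t.
Variable K : R.
Hypothesis HK : 1 <= K.
Hypothesis Hr : forall t, 0 < t -> - K <= a t * Derive_n a 2 t / (Derive a t)^2 <= 1.

Lemma a_abs t : a t = a (Rabs t).
Proof.
  destruct (Rle_lt_dec 0 t).
  - rewrite Rabs_pos_eq; auto.
  - rewrite Rabs_left by auto. rewrite Hev; auto.
Qed.

Lemma a_cont t : continuous a t.
Proof.
  destruct (Rle_lt_dec 0 t) as [h|h]. auto.
  apply continuous_ext with (fun s => a (- s)). intro; apply Hev.
  apply (continuous_comp (fun s => - s) a).
  apply (continuous_opp (fun s:R => s)). apply continuous_id.
  apply Hcont0; lra.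
Qed.

Lemma a_pos t : t <> 0 -> 0 < a t.
Proof.
  intro h. rewrite a_abs. rewrite <- Ha0. apply Hinc. lra.
  apply Rabs_pos_lt; auto.
Qed.

Lemma a_nonneg t : 0 <= a t.
Proof. destruct (Req_dec t 0). subst; lra. left; apply a_pos; auto. Qed.

Lemma a_le_inv s t : 0 <= s -> 0 <= t -> a s <= a t -> s <= t.
Proof.
  intros hs ht h. destruct (Rle_lt_dec s t); auto.
  assert (a t < a s) by (apply Hinc; lra). lra.
Qed.

Lemma a_lt_inv s t : 0 <= s -> 0 <= t -> a s < a t -> s < t.
Proof.
  intros hs ht h. destruct (Rlt_le_dec s t); auto.
  destruct r. assert (a t < a s) by (apply Hinc; lra). lra. subst; lra.
Qed.

Lemma a_inj s t : 0 <= s -> 0 <= t -> a s = a t -> s = t.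
Proof. intros; apply Rle_antisym; apply a_le_inv; lra. Qed.

Lemma a_le s t : 0 <= s -> s <= t -> a s <= a t.
Proof. intros h1 h2. destruct h2. left; apply Hinc; auto. subst; lra. Qed.

Definition b (u : R) : R :=
  epsilon (inhabits 0) (fun t => 0 <= t /\ a t = Rmax 0 u).

Lemma b_spec M u : 0 <= M -> 0 <= u <= a M -> 0 <= b u /\ a (b u) = u.
Proof.
  intros hM hu.
  destruct (IVT_gen a 0 M u) as [x [hx1 hx2]].
  intro t; apply c2p, a_cont.
  assert (0 <= a M) by apply a_nonneg.
  rewrite Ha0. rewrite Rmin_left, Rmax_right by lra. lra.
  unfold b. rewrite Rmax_right by lra.
  apply (epsilon_spec (inhabits 0) (fun t => 0 <= t /\ a t = u)).
  exists x. split; auto. rewrite Rmin_left in hx1; lra.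
Qed.

Lemma b_le M u : 0 <= M -> 0 <= u <= a M -> b u <= M.
Proof.
  intros hM hu. destruct (b_spec M u hM hu) as [h1 h2].
  apply a_le_inv; lra.
Qed.

Lemma b_a t : 0 <= t -> b (a t) = t.
Proof.
  intro ht. destruct (b_spec t (a t) ht) as [h1 h2]. split; [apply a_nonneg|lra].
  apply a_inj; auto.
Qed.

Lemma b_neg u : u <= 0 -> b u = 0.
Proof.
  intro h. transitivity (b (a 0)).
  unfold b. rewrite Ha0, !Rmax_left by lra. reflexivity.
  apply b_a; lra.
Qed.

Lemma b_lt M u v : 0 <= M -> 0 <= u -> u < v -> v <= a M -> b u < b v.
Proof.
  intros hM hu huv hv.
  destruct (b_spec M u hM) as [h1 h2]; try lra.
  destruct (b_spec M v hM) as [h3 h4]; try lra.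
  apply a_lt_inv; lra.
Qed.

Lemma b_nn M v : 0 <= M -> v <= a M -> 0 <= b v.
Proof.
  intros hM hv. destruct (Rle_lt_dec v 0). rewrite b_neg; lra.
  apply (b_spec M v); lra.
Qed.

Lemma b_ub M v : 0 <= M -> v <= a M -> b v <= M.
Proof.
  intros hM hv. destruct (Rle_lt_dec v 0). rewrite b_neg; lra.
  apply (b_le M v); lra.
Qed.

Lemma a_b M v : 0 <= M -> 0 <= v <= a M -> a (b v) = v.
Proof. intros; apply (b_spec M v); auto. Qed.

Lemma a_b_max M v : 0 <= M -> v <= a M -> a (b v) = Rmax 0 v.
Proof.
  intros hM hv. destruct (Rle_lt_dec v 0).
  rewrite b_neg, Rmax_left; lra.
  rewrite Rmax_right by lra. apply (a_b M); lra.
Qed.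

Lemma b_cont M u : 0 <= M -> u < a M -> continuous b u.
Proof.
  intros hM hu. apply filterlim_locally. intros eps.
  set (t0 := b u). set (e := eps / 2).
  assert (he : 0 < e) by (unfold e; destruct eps; simpl; lra).
  assert (ht0 : 0 <= t0) by (apply (b_nn M); lra).
  assert (hat0 : a t0 = Rmax 0 u) by (apply (a_b_max M); lra).
  assert (hup : Rmax 0 u < a (t0 + e)) by (rewrite <- hat0; apply Hinc; lra).
  assert (hu0 : u <= Rmax 0 u) by apply Rmax_r.
  destruct (Rlt_le_dec 0 (t0 - e)) as [hA|hB].
  - assert (hlo : a (t0 - e) < a t0) by (apply Hinc; lra).
    assert (hpos : 0 < a (t0 - e)) by (apply a_pos; lra).
    assert (hu1 : u = Rmax 0 u).
    { destruct (Rle_lt_dec u 0) as [h|h].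
      - exfalso. assert (t0 = 0) by (apply b_neg; auto). lra.
      - rewrite Rmax_right; lra. }
    assert (hd : 0 < Rmin (a (t0 + e) - u) (u - a (t0 - e))).
    { apply Rmin_glb_lt; lra. }
    exists (mkposreal _ hd). intros v hv. apply ballR in hv. simpl in hv.
    apply ballR.
    assert (h1 : Rabs (v - u) < a (t0 + e) - u) by (eapply Rlt_le_trans; [exact hv| apply Rmin_l]).
    assert (h2 : Rabs (v - u) < u - a (t0 - e)) by (eapply Rlt_le_trans; [exact hv| apply Rmin_r]).
    apply Rabs_lt_between' in h1. apply Rabs_lt_between' in h2.
    assert (hv0 : 0 < v) by lra.
    assert (hb1 : b v <= t0 + e) by (apply (b_ub (t0 + e)); lra).
    assert (hb2 : a (b v) = v) by (apply (a_b (t0 + e)); lra).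
    assert (hb3 : t0 - e < b v) by (apply a_lt_inv; try lra; apply (b_nn (t0+e)); lra).
    apply Rabs_lt_between'. fold t0. unfold e in *. destruct eps; simpl in *; lra.
  - assert (hd : 0 < a (t0 + e) - u) by lra.
    exists (mkposreal _ hd). intros v hv. apply ballR in hv. simpl in hv.
    apply ballR. apply Rabs_lt_between' in hv.
    assert (hb1 : b v <= t0 + e) by (apply (b_ub (t0 + e)); lra).
    assert (hb3 : 0 <= b v) by (apply (b_nn (t0+e)); lra).
    apply Rabs_lt_between'. fold t0. unfold e in *. destruct eps; simpl in *; lra.
Qed.

Lemma b_pos M u : 0 <= M -> 0 < u <= a M -> 0 < b u.
Proof.
  intros hM hu. assert (h := b_lt M 0 u hM (Rle_refl 0) (proj1 hu) (proj2 hu)).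
  rewrite b_neg in h; lra.
Qed.

Lemma b_derive M u : 0 <= M -> 0 < u < a M -> is_derive b u (/ Derive a (b u)).
Proof.
  intros hM hu.
  set (lb := u / 2). set (ub := (u + a M) / 2).
  assert (hlb : 0 < lb < u) by (unfold lb; lra).
  assert (hub : u < ub < a M) by (unfold ub; lra).
  assert (hblb : 0 < b lb) by (apply (b_pos M); lra).
  assert (Prf : forall y, b lb <= y <= b ub -> derivable_pt a y).
  { intros y hy. apply ex_derive_Reals_0. apply Hd. lra. }
  assert (Prg_incr : b lb <= b u <= b ub).
  { split; left; apply (b_lt M); lra. }
  apply is_derive_Reals.
  assert (H := derivable_pt_lim_recip_interv a b lb ub u Prf (c2p _ _ (b_cont M u hM (proj2 hu)))
     ltac:(lra) ltac:(lra) Prg_incr).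
  rewrite Derive_Reals in H. unfold Rdiv in H. rewrite Rmult_1_l in H.
  apply H.
  - intros x hx. unfold comp, id. apply (a_b M); lra.
  - apply Rgt_not_eq. apply Hdpos. lra.
Qed.

Definition q t := a t / Derive a t.
Definition rr t := a t * Derive_n a 2 t / (Derive a t)^2.

Lemma q_derive t : 0 < t -> is_derive q t (1 - rr t).
Proof.
  intro ht. unfold q, rr.
  assert (h1 := Hd t ht). assert (h2 := Hdd t ht). assert (h3 := Hdpos t ht).
  auto_derive.
  - repeat split; auto. lra.
  - simpl. change (fun x : R => a x) with a. change (fun x : R => Derive a x) with (Derive a).
    field. lra.
Qed.

Lemma q_pos t : 0 < t -> 0 < q t.
Proof.
  intro ht. unfold q. apply Rdiv_lt_0_compat. apply a_pos; lra. apply Hdpos; auto.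
Qed.

Lemma q_mono s t : 0 < s -> s <= t -> q s <= q t.
Proof.
  intros hs hst.
  destruct (MVT_gen q s t (fun x => 1 - rr x)) as [c [hc1 hc2]].
  - intros x hx. rewrite Rmin_left, Rmax_right in hx by lra. apply q_derive; lra.
  - intros x hx. rewrite Rmin_left, Rmax_right in hx by lra.
    eapply der_cont. apply q_derive; lra.
  - rewrite Rmin_left, Rmax_right in hc1 by lra.
    assert (rr c <= 1) by (apply Hr; lra).
    assert (0 <= (1 - rr c) * (t - s)) by (apply Rmult_le_pos; lra). lra.
Qed.

Lemma q_lim eps : 0 < eps -> exists d, 0 < d /\ forall t, 0 < t < d -> q t < eps.
Proof.
  intro he.
  destruct (classic (exists t1, 0 < t1 /\ q t1 < eps)) as [[t1 [h1 h2]]|hn].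
  - exists t1. split; auto. intros t ht. eapply Rle_lt_trans; [|exact h2].
    apply q_mono; lra.
  - exfalso.
    assert (hq : forall t, 0 < t -> eps <= q t).
    { intros t ht. destruct (Rle_lt_dec eps (q t)); auto. exfalso; apply hn; exists t; auto. }
    set (phi := fun t => ln (a t) - t / eps).
    assert (hphi : forall t, 0 < t -> is_derive phi t (Derive a t / a t - 1 / eps)).
    { intros t ht. unfold phi.
      assert (h1 := Hd t ht). assert (h3 := a_pos t ltac:(lra)).
      auto_derive. repeat split; auto. change (fun x : R => a x) with a. field. lra. }
    assert (hlow : forall t, 0 < t < 1 -> phi 1 <= phi t).
    { intros t ht.
      destruct (MVT_gen phi t 1 (fun x => Derive a x / a x - 1 / eps)) as [c [hc1 hc2]].
      - intros x hx. rewrite Rmin_left, Rmax_right in hx by lra. apply hphi; lra.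
      - intros x hx. rewrite Rmin_left, Rmax_right in hx by lra.
        eapply der_cont. apply hphi; lra.
      - rewrite Rmin_left, Rmax_right in hc1 by lra.
        assert (hc : eps <= q c) by (apply hq; lra).
        assert (hac : 0 < a c) by (apply a_pos; lra).
        assert (hdc : 0 < Derive a c) by (apply Hdpos; lra).
        unfold q in hc.
        assert (Derive a c / a c <= 1 / eps).
        { apply (Rmult_le_reg_r (a c)); auto. unfold Rdiv. rewrite Rmult_assoc, Rinv_l, Rmult_1_r by lra.
          apply (Rmult_le_reg_l eps); auto. replace (eps * (1 * / eps * a c)) with (a c) by (field; lra).
          apply (Rmult_le_reg_r (/ Derive a c)). apply Rinv_0_lt_compat; auto.
          replace (eps * Derive a c * / Derive a c) with eps by (field; lra). exact hc. }
        assert ((Derive a c / a c - 1 / eps) * (1 - t) <= 0).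
        { apply Rmult_le_0_r; lra. }
        lra. }
    set (m := exp (phi 1)).
    assert (hm : 0 < m) by apply exp_pos.
    assert (hc0 : filterlim a (locally 0) (locally (a 0))) by apply a_cont.
    assert (hc1 := proj1 (filterlim_locally (F := locally 0) a (a 0)) hc0).
    destruct (hc1 (mkposreal _ hm)) as [d hd].
    set (t := Rmin (d / 2) (1 / 2)).
    assert (ht : 0 < t < 1).
    { unfold t. split. apply Rmin_glb_lt. destruct d; simpl; lra. lra.
      eapply Rle_lt_trans. apply Rmin_r. lra. }
    assert (hat : Rabs (a t - a 0) < m).
    { apply ballR. apply hd. apply ballR. rewrite Rminus_0_r, Rabs_pos_eq by lra.
      eapply Rle_lt_trans. apply Rmin_l. destruct d; simpl; lra. }
    rewrite Ha0, Rminus_0_r in hat.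
    assert (hl := hlow t ht). unfold phi in hl.
    assert (ln (a t) >= phi 1).
    { unfold phi. assert (0 < t / eps) by (apply Rdiv_lt_0_compat; lra). lra. }
    assert (hpt := a_pos t ltac:(lra)).
    assert (m <= a t).
    { unfold m. rewrite <- (exp_ln (a t)) by auto.
      destruct (Rle_lt_or_eq_dec (phi 1) (ln (a t))) as [h|h]; [lra| |].
      left; apply exp_increasing; auto. right; rewrite h; auto. }
    rewrite Rabs_pos_eq in hat by lra. simpl in hat. lra.
Qed.

Lemma qb_lim eps : 0 < eps -> exists d, 0 < d /\ (forall u, 0 < u < d -> 0 < b u /\ q (b u) < eps).
Proof.
  intro he. destruct (q_lim eps he) as [d1 [hd1 hq]].
  assert (hc : filterlim b (locally 0) (locally (b 0))).
  { apply (b_cont 1); [lra | apply a_pos; lra]. }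
  assert (hc1 := proj1 (filterlim_locally (F := locally 0) b (b 0)) hc).
  destruct (hc1 (mkposreal _ hd1)) as [d2 hd2].
  assert (ha1 : 0 < a 1) by (apply a_pos; lra).
  exists (Rmin d2 (a 1)). split. apply Rmin_glb_lt; auto. destruct d2; auto.
  intros u hu.
  assert (hu1 : u < a 1) by (eapply Rlt_le_trans; [apply hu|apply Rmin_r]).
  assert (hbp : 0 < b u) by (apply (b_pos 1); lra).
  split; auto. apply hq. split; auto.
  assert (h := hd2 u). rewrite b_neg in h by lra.
  assert (h' : Rabs (b u - 0) < d1).
  { apply ballR. apply h. apply ballR. rewrite Rminus_0_r, Rabs_pos_eq by lra.
    eapply Rlt_le_trans; [apply hu|apply Rmin_l]. }
  rewrite Rminus_0_r, Rabs_pos_eq in h' by lra. exact h'.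
Qed.

Lemma cont_Da t : 0 < t -> continuous (Derive a) t.
Proof. intro ht. apply (@ex_derive_continuous R_AbsRing R_NormedModule). apply Hdd; auto. Qed.

Lemma cont_q t : 0 < t -> continuous q t.
Proof. intro ht. unfold q. apply cdiv. apply a_cont. apply cont_Da; auto. apply Rgt_not_eq, Hdpos; auto. Qed.

Lemma cont_rr t : 0 < t -> continuous rr t.
Proof.
  intro ht. unfold rr. apply cdiv. apply cmul. apply a_cont. apply Hc2; auto.
  apply cpow, cont_Da; auto. apply pow_nonzero, Rgt_not_eq, Hdpos; auto.
Qed.

Definition p u := q (b u).
Definition pi1 u := (1 - rr (b u)) / Derive a (b u).
Definition beta u := Derive_n a 2 (b u) / (Derive a (b u))^3.

Lemma q0 : q 0 = 0.
Proof. unfold q. rewrite Ha0. unfold Rdiv; ring. Qed.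

Lemma p_neg u : u <= 0 -> p u = 0.
Proof. intro h. unfold p. rewrite b_neg; auto. apply q0. Qed.

Lemma p_cont M u : 0 <= M -> u < a M -> continuous p u.
Proof.
  intros hM hu. destruct (Rtotal_order u 0) as [h|[h|h]].
  - apply continuous_ext_loc with (fun _ => 0). apply (loc_intro u _ (- u)). lra.
    intros y hy. apply Rabs_lt_between' in hy. rewrite p_neg; lra.
    apply cconst.
  - subst u. apply filterlim_locally. intro eps.
    destruct (qb_lim eps (cond_pos eps)) as [d [hd H]].
    apply (loc_intro 0 _ d hd). intros y hy. apply ballR. rewrite (p_neg 0) by lra.
    rewrite Rminus_0_r in hy |- *. destruct (Rle_lt_dec y 0). rewrite p_neg, Rabs_R0 by lra. apply cond_pos.
    rewrite Rabs_pos_eq in hy by lra. destruct (H y) as [h1 h2]. lra.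
    assert (0 < q (b y)) by (apply q_pos; auto). unfold p. rewrite Rabs_pos_eq; lra.
  - unfold p. apply ccomp. apply (b_cont M); auto. apply cont_q. apply (b_pos M); lra.
Qed.

Lemma p_derive M u : 0 <= M -> 0 < u < a M -> is_derive p u (pi1 u).
Proof.
  intros hM hu. unfold p, pi1.
  assert (hb : 0 < b u) by (apply (b_pos M); lra).
  assert (H := is_derive_comp q b u _ _ (q_derive (b u) hb) (b_derive M u hM hu)).
  apply (is_derive_ext _ _ _ _ (fun _ => eq_refl)) in H.
  replace ((1 - rr (b u)) / Derive a (b u)) with (scal (/ Derive a (b u)) (1 - rr (b u))). exact H.
  unfold scal; simpl; unfold mult; simpl. unfold Rdiv; ring.
Qed.

Lemma pi1_cont M u : 0 <= M -> 0 < u < a M -> continuous pi1 u.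
Proof.
  intros hM hu. assert (hb : 0 < b u) by (apply (b_pos M); lra).
  unfold pi1. apply cdiv. apply cminus. apply cconst. apply ccomp. apply (b_cont M); lra.
  apply cont_rr; auto. apply ccomp. apply (b_cont M); lra. apply cont_Da; auto.
  apply Rgt_not_eq, Hdpos; auto.
Qed.

Lemma beta_cont M u : 0 <= M -> 0 < u < a M -> continuous beta u.
Proof.
  intros hM hu. assert (hb : 0 < b u) by (apply (b_pos M); lra).
  unfold beta. apply cdiv. apply ccomp. apply (b_cont M); lra. apply Hc2; auto.
  apply cpow. apply ccomp. apply (b_cont M); lra. apply cont_Da; auto.
  apply pow_nonzero, Rgt_not_eq, Hdpos; auto.
Qed.

Lemma u_pi1 M u : 0 <= M -> 0 < u <= a M -> u * pi1 u = (1 - rr (b u)) * q (b u).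
Proof.
  intros hM hu. assert (hb : 0 < b u) by (apply (b_pos M); lra).
  assert (hab : a (b u) = u) by (apply (a_b M); lra).
  assert (hdd := Hdpos (b u) hb). unfold pi1, q. rewrite hab. field. lra.
Qed.

Lemma u2_beta M u : 0 <= M -> 0 < u <= a M -> u * u * beta u = rr (b u) * q (b u).
Proof.
  intros hM hu. assert (hb : 0 < b u) by (apply (b_pos M); lra).
  assert (hab : a (b u) = u) by (apply (a_b M); lra).
  assert (hdd := Hdpos (b u) hb). unfold beta, rr, q. rewrite hab. field. lra.
Qed.

Lemma b_mono M u v : 0 <= M -> u <= v -> v <= a M -> b u <= b v.
Proof.
  intros hM huv hv. destruct (Rle_lt_dec u 0).
  rewrite (b_neg u) by auto. apply (b_nn M); auto.
  destruct huv as [h|h]. left; apply (b_lt M); lra. subst; lra.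
Qed.

Definition Th tau t := asin (a t / a tau).

Lemma Th_prop tau t : 0 < tau -> 0 <= t <= tau ->
  0 <= Th tau t <= PI / 2 /\ sin (Th tau t) = a t / a tau.
Proof.
  intros ht htt. assert (hA : 0 < a tau) by (apply a_pos; lra).
  assert (h1 : 0 <= a t / a tau <= 1).
  { split. apply Rdiv_le_0_compat; auto. apply a_nonneg.
    apply (Rmult_le_reg_r (a tau)); auto. unfold Rdiv. rewrite Rmult_assoc, Rinv_l, Rmult_1_r by lra.
    rewrite Rmult_1_l. apply a_le; lra. }
  assert (hs : sin (Th tau t) = a t / a tau) by (apply sin_asin; lra).
  split; auto. assert (hb := asin_bound (a t / a tau)). fold (Th tau t) in hb.
  split; try lra. destruct (Rle_lt_dec 0 (Th tau t)); auto.
  assert (sin (Th tau t) < 0) by (apply sin_lt_0_var; lra). lra.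
Qed.

Lemma Th_strict tau t : 0 < tau -> 0 < t < tau -> 0 < Th tau t < PI / 2.
Proof.
  intros ht htt. destruct (Th_prop tau t ht) as [[h1 h2] h3]; try lra.
  assert (hA : 0 < a tau) by (apply a_pos; lra).
  assert (hat : 0 < a t) by (apply a_pos; lra).
  assert (hat2 : a t < a tau) by (apply Hinc; lra).
  split.
  - destruct h1; auto. rewrite <- H, sin_0 in h3.
    assert (0 < a t / a tau) by (apply Rdiv_lt_0_compat; auto). lra.
  - destruct h2; auto. rewrite H, sin_PI2 in h3.
    assert (a t / a tau < 1).
    { apply (Rmult_lt_reg_r (a tau)); auto. unfold Rdiv. rewrite Rmult_assoc, Rinv_l by lra. lra. }
    lra.
Qed.

Lemma Th_0 tau : Th tau 0 = 0.
Proof. unfold Th. rewrite Ha0. unfold Rdiv. rewrite Rmult_0_l. apply asin_0. Qed.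

Lemma g_Th tau t : 0 < tau -> 0 <= t <= tau -> b (a tau * sin (Th tau t)) = t.
Proof.
  intros ht htt. destruct (Th_prop tau t ht htt) as [_ h].
  assert (hA : 0 < a tau) by (apply a_pos; lra).
  rewrite h. replace (a tau * (a t / a tau)) with (a t) by (field; lra). apply b_a; lra.
Qed.

Lemma Th_lim0 tau : 0 < tau -> filterlim (Th tau) (at_right 0) (locally 0).
Proof.
  intro ht. apply filterlim_locally. intro eps.
  assert (hA : 0 < a tau) by (apply a_pos; lra).
  set (e := Rmin eps (PI / 2) / 2).
  assert (he : 0 < e < PI / 2).
  { unfold e. assert (h := PI2_pos). assert (0 < Rmin eps (PI/2)) by (apply Rmin_glb_lt; auto; apply cond_pos).
    assert (Rmin eps (PI/2) <= PI/2) by apply Rmin_r. lra. }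
  assert (hse : 0 < sin e) by (apply sin_gt_0; lra).
  assert (hc : filterlim a (locally 0) (locally (a 0))) by apply a_cont.
  assert (hc1 := proj1 (filterlim_locally (F := locally 0) a (a 0)) hc).
  assert (hd : 0 < a tau * sin e) by (apply Rmult_lt_0_compat; auto).
  destruct (hc1 (mkposreal _ hd)) as [d hd1].
  exists (mkposreal _ (Rmin_glb_lt _ _ _ (cond_pos d) ht)). intros t ht1 ht2.
  apply ballR in ht1. simpl in ht1. apply ballR.
  assert (ht3 : Rabs (t - 0) < d) by (eapply Rlt_le_trans; [exact ht1|apply Rmin_l]).
  assert (ht4 : Rabs (t - 0) < tau) by (eapply Rlt_le_trans; [exact ht1|apply Rmin_r]).
  rewrite Rminus_0_r, Rabs_pos_eq in ht3, ht4 by lra.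
  assert (h := hd1 t). rewrite Ha0 in h.
  assert (h' : Rabs (a t - 0) < a tau * sin e).
  { apply ballR. apply h. apply ballR. rewrite Rminus_0_r, Rabs_pos_eq; lra. }
  rewrite Rminus_0_r, Rabs_pos_eq in h' by apply a_nonneg.
  destruct (Th_prop tau t ht) as [[h1 h2] h3]; try lra.
  assert (Th tau t < e).
  { apply sin_lt_inv; try lra. rewrite h3. apply (Rmult_lt_reg_r (a tau)); auto.
    unfold Rdiv. rewrite Rmult_assoc, Rinv_l by lra. lra. }
  rewrite Rminus_0_r, Rabs_pos_eq by lra.
  assert (e < eps). { unfold e. assert (Rmin eps (PI/2) <= eps) by apply Rmin_l.
    assert (0 < Rmin eps (PI/2)) by (apply Rmin_glb_lt; auto; try apply cond_pos; apply PI2_pos). lra. }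
  lra.
Qed.

Lemma Th_limtau tau : 0 < tau -> filterlim (Th tau) (at_left tau) (locally (PI / 2)).
Proof.
  intro ht. apply filterlim_locally. intro eps.
  assert (hA : 0 < a tau) by (apply a_pos; lra).
  set (e := Rmin eps (PI / 2) / 2).
  assert (he : 0 < e < PI / 2).
  { unfold e. assert (h := PI2_pos). assert (0 < Rmin eps (PI/2)) by (apply Rmin_glb_lt; auto; apply cond_pos).
    assert (Rmin eps (PI/2) <= PI/2) by apply Rmin_r. lra. }
  assert (hse : sin (PI/2 - e) < 1).
  { rewrite <- sin_PI2. apply sin_increasing_1; lra. }
  assert (hc : filterlim a (locally tau) (locally (a tau))) by apply a_cont.
  assert (hc1 := proj1 (filterlim_locally (F := locally tau) a (a tau)) hc).
  assert (hd : 0 < a tau * (1 - sin (PI/2 - e))) by (apply Rmult_lt_0_compat; lra).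
  destruct (hc1 (mkposreal _ hd)) as [d hd1].
  exists (mkposreal _ (Rmin_glb_lt _ _ _ (cond_pos d) ht)). intros t ht1 ht2.
  apply ballR in ht1. simpl in ht1. apply ballR.
  assert (ht3 : Rabs (t - tau) < d) by (eapply Rlt_le_trans; [exact ht1|apply Rmin_l]).
  assert (ht4 : Rabs (t - tau) < tau) by (eapply Rlt_le_trans; [exact ht1|apply Rmin_r]).
  apply Rabs_lt_between' in ht4.
  assert (h' : Rabs (a t - a tau) < a tau * (1 - sin (PI/2 - e))).
  { apply ballR. apply hd1. apply ballR. exact ht3. }
  apply Rabs_lt_between' in h'.
  destruct (Th_prop tau t ht) as [[h1 h2] h3]; try lra.
  assert (PI/2 - e < Th tau t).
  { apply sin_lt_inv; try lra. rewrite h3. apply (Rmult_lt_reg_r (a tau)); auto.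
    unfold Rdiv. rewrite Rmult_assoc, Rinv_l by lra. lra. }
  assert (e < eps). { unfold e. assert (Rmin eps (PI/2) <= eps) by apply Rmin_l.
    assert (0 < Rmin eps (PI/2)) by (apply Rmin_glb_lt; auto; try apply cond_pos; apply PI2_pos). lra. }
  apply Rabs_lt_between'. lra.
Qed.

Definition gg tau th := b (a tau * sin th).
Definition dgg tau th := a tau * cos th / Derive a (b (a tau * sin th)).

Lemma aM tau : 0 < tau -> a tau < a (tau + 1).
Proof. intro; apply Hinc; lra. Qed.

Lemma u_range tau th : 0 < tau -> 0 < sin th -> 0 < a tau * sin th < a (tau + 1).
Proof.
  intros ht hs. assert (hA : 0 < a tau) by (apply a_pos; lra).
  assert (h := aM tau ht). assert (sin th <= 1) by apply SIN_bound.
  split. apply Rmult_lt_0_compat; auto.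
  assert (a tau * sin th <= a tau) by (rewrite <- (Rmult_1_r (a tau)) at 2; apply Rmult_le_compat_l; lra).
  lra.
Qed.

Lemma gg_derive tau th : 0 < tau -> 0 < sin th -> is_derive (gg tau) th (dgg tau th).
Proof.
  intros ht hs. destruct (u_range tau th ht hs) as [h1 h2].
  unfold gg, dgg.
  assert (H := is_derive_comp b (fun th => a tau * sin th) th _ (a tau * cos th)
     (b_derive (tau + 1) (a tau * sin th) ltac:(lra) ltac:(lra))).
  assert (Hd2 : is_derive (fun th => a tau * sin th) th (a tau * cos th)).
  { auto_derive; auto. ring. }
  specialize (H Hd2).
  replace (a tau * cos th / Derive a (b (a tau * sin th))) with
    (scal (a tau * cos th) (/ Derive a (b (a tau * sin th)))). exact H.
  unfold scal; simpl; unfold mult; simpl. unfold Rdiv; ring.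
Qed.

Lemma dgg_cont tau th : 0 < tau -> 0 < sin th -> continuous (dgg tau) th.
Proof.
  intros ht hs. destruct (u_range tau th ht hs) as [h1 h2].
  assert (hb : 0 < b (a tau * sin th)) by (apply (b_pos (tau+1)); lra).
  unfold dgg. apply cdiv. apply cmul. apply cconst. apply continuous_cos.
  apply (ccomp (fun y => b (a tau * sin y)) (Derive a)).
  apply (ccomp (fun y => a tau * sin y) b). apply cmul. apply cconst. apply continuous_sin.
  apply (b_cont (tau+1)); lra. apply cont_Da; auto.
  apply Rgt_not_eq, Hdpos; auto.
Qed.

Lemma Th_le tau x y : 0 < tau -> 0 <= x <= y -> y <= tau -> Th tau x <= Th tau y.
Proof.
  intros ht hxy hy.
  destruct (Th_prop tau x ht) as [hx1 hx2]; try lra.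
  destruct (Th_prop tau y ht) as [hy1 hy2]; try lra.
  assert (hA : 0 < a tau) by (apply a_pos; lra).
  destruct (Rle_lt_dec (Th tau x) (Th tau y)) as [h|h]; auto.
  assert (sin (Th tau y) < sin (Th tau x)) by (apply sin_increasing_1; lra).
  assert (a x <= a y) by (apply a_le; lra).
  assert (a x / a tau <= a y / a tau) by (apply Rmult_le_compat_r; auto; left; apply Rinv_0_lt_compat; auto).
  lra.
Qed.

Lemma subst tau x y (f psi : R -> R) : 0 < tau -> 0 < x <= y -> y < tau ->
  (forall t, x <= t <= y -> continuous f t) ->
  (forall th, 0 < th < PI / 2 -> psi th = dgg tau th * f (gg tau th)) ->
  is_RInt f x y (RInt psi (Th tau x) (Th tau y)).
Proof.
  intros ht hxy hy hf hpsi.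
  assert (hx1 := Th_strict tau x ht ltac:(lra)).
  assert (hy1 := Th_strict tau y ht ltac:(lra)).
  assert (hle := Th_le tau x y ht ltac:(lra) ltac:(lra)).
  assert (hA : 0 < a tau) by (apply a_pos; lra).
  assert (hgx : gg tau (Th tau x) = x) by (apply g_Th; lra).
  assert (hgy : gg tau (Th tau y) = y) by (apply g_Th; lra).
  assert (H := is_RInt_comp f (gg tau) (dgg tau) (Th tau x) (Th tau y)).
  rewrite Rmin_left, Rmax_right in H by lra.
  rewrite hgx, hgy in H.
  assert (hsin : forall th, Th tau x <= th <= Th tau y -> 0 < sin th).
  { intros th hth. apply sin_gt_0; assert (h := PI2_pos); lra. }
  assert (H1 : is_RInt (fun th => scal (dgg tau th) (f (gg tau th))) (Th tau x) (Th tau y) (RInt f x y)).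
  { apply H.
    - intros th hth. apply hf.
      destruct (Th_prop tau x ht) as [_ sx]; try lra.
      destruct (Th_prop tau y ht) as [_ sy]; try lra.
      assert (s1 : sin (Th tau x) <= sin th) by (apply sin_le_mono; lra).
      assert (s2 : sin th <= sin (Th tau y)) by (apply sin_le_mono; lra).
      split.
      + rewrite <- hgx. unfold gg. apply (b_mono (tau+1)). lra.
        apply Rmult_le_compat_l; lra.
        destruct (u_range tau th ht (hsin th hth)); lra.
      + rewrite <- hgy. unfold gg. apply (b_mono (tau+1)). lra.
        apply Rmult_le_compat_l; lra.
        destruct (u_range tau (Th tau y) ht ltac:(apply hsin; lra)); lra.
    - intros th hth. split. apply gg_derive; auto. apply dgg_cont; auto. }
  assert (hex : ex_RInt f x y) by (apply exRc; intros z hz; apply hf;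
    rewrite Rmin_left, Rmax_right in hz by lra; lra).
  replace (RInt psi (Th tau x) (Th tau y)) with (RInt f x y).
  apply RIc; auto.
  symmetry. apply RIu. apply is_RInt_ext with (2 := H1).
  intros th hth. rewrite Rmin_left, Rmax_right in hth by lra. rewrite hpsi by lra. reflexivity.
Qed.

Lemma usin_range M u v : 0 < u < a M -> 0 < sin v -> 0 < u * sin v < a M.
Proof.
  intros hu hs. assert (sin v <= 1) by apply SIN_bound. split. apply Rmult_lt_0_compat; lra.
  assert (u * sin v <= u) by (rewrite <- (Rmult_1_r u) at 2; apply Rmult_le_compat_l; lra). lra.
Qed.

Lemma D_is M u v : 0 <= M -> 0 < u < a M -> 0 < sin v ->
  is_derive (fun z => p (z * sin v)) u (sin v * pi1 (u * sin v)).
Proof.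
  intros hM hu hs. assert (hr := usin_range M u v hu hs).
  assert (H := is_derive_comp p (fun z => z * sin v) u _ (sin v) (p_derive M (u * sin v) hM hr)).
  assert (H2 : is_derive (fun z => z * sin v) u (sin v)) by (auto_derive; auto; ring).
  specialize (H H2). exact H.
Qed.

Lemma D_pos M u v : 0 <= M -> 0 < u < a M -> 0 < sin v ->
  Derive (fun z => p (z * sin v)) u = sin v * pi1 (u * sin v).
Proof. intros. apply is_derive_unique. apply (D_is M); auto. Qed.

Lemma D_is0 u v : 0 < u -> sin v <= 0 -> is_derive (fun z => p (z * sin v)) u 0.
Proof.
  intros hu hs. apply is_derive_ext_loc with (fun _ => 0).
  apply (loc_intro u _ u hu). intros y hy. apply Rabs_lt_between' in hy.
  rewrite p_neg; auto. assert (0 <= y * - sin v) by (apply Rmult_le_pos; lra). lra.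
  apply (is_derive_const 0).
Qed.

Lemma D_npos u v : 0 < u -> sin v <= 0 -> Derive (fun z => p (z * sin v)) u = 0.
Proof. intros. apply is_derive_unique. apply D_is0; auto. Qed.

Lemma sin_nonpos v : - PI <= v <= 0 -> sin v <= 0.
Proof.
  intros h. destruct (Req_dec v 0). subst; rewrite sin_0; lra.
  destruct (Req_dec v (- PI)). subst. rewrite sin_neg, sin_PI; lra.
  left; apply sin_lt_0_var; lra.
Qed.

Lemma sin_le_id v : 0 <= v -> sin v <= v.
Proof. intro h. destruct h. left; apply sin_lt_x; auto. subst; rewrite sin_0; lra. Qed.

Lemma D_cont2 M A t : 0 <= M -> 0 < A < a M -> 0 <= t <= PI/2 ->
  continuity_2d_pt (fun u v => Derive (fun z => p (z * sin v)) u) A t.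
Proof.
  intros hM hA ht. assert (hpi := PI2_pos).
  destruct (Req_dec t 0) as [h0|h0].
  - subst t. intro eps.
    assert (hK : 0 < 1 + K) by lra.
    assert (hc : 0 < eps * A / (2 * (1 + K))).
    { apply Rdiv_lt_0_compat. apply Rmult_lt_0_compat; [apply cond_pos|lra]. lra. }
    destruct (qb_lim _ hc) as [d [hd Hd']].
    assert (haM : 0 < a M) by lra.
    set (del := Rmin (Rmin (A / 2) (a M - A)) (Rmin (PI / 2) (d / a M))).
    assert (hdel : 0 < del).
    { unfold del. apply Rmin_glb_lt; apply Rmin_glb_lt; try lra. apply Rdiv_lt_0_compat; lra. }
    assert (hd1 : del <= A / 2) by (unfold del; eapply Rle_trans; apply Rmin_l).
    assert (hd2 : del <= a M - A) by (unfold del; eapply Rle_trans; [apply Rmin_l|apply Rmin_r]).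
    assert (hd3 : del <= PI / 2) by (unfold del; eapply Rle_trans; [apply Rmin_r|apply Rmin_l]).
    assert (hd4 : del <= d / a M) by (unfold del; eapply Rle_trans; apply Rmin_r).
    exists (mkposreal _ hdel). intros u v hu hv. simpl in hu, hv.
    rewrite (D_npos A 0) by (try lra; rewrite sin_0; lra).
    apply Rabs_lt_between' in hu. apply Rabs_lt_between' in hv.
    destruct (Rle_lt_dec v 0) as [hv0|hv0].
    + rewrite D_npos by (try lra; apply sin_nonpos; lra). rewrite Rminus_0_r, Rabs_R0. apply cond_pos.
    + assert (hs : 0 < sin v) by (apply sin_gt_0; lra).
      assert (hu' : 0 < u < a M) by lra.
      rewrite (D_pos M) by auto.
      destruct (usin_range M u v hu' hs) as [hw1 hw2].
      assert (hw3 : u * sin v < d).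
      { assert (sin v <= v) by (apply sin_le_id; lra).
        assert (u * sin v <= u * v) by (apply Rmult_le_compat_l; lra).
        assert (u * v < a M * (d / a M)).
        { apply Rmult_le_0_lt_compat; lra. }
        replace (a M * (d / a M)) with d in * by (field; lra). lra. }
      destruct (Hd' (u * sin v)) as [hb hq]. lra.
      assert (hup := u_pi1 M (u * sin v) hM ltac:(lra)).
      assert (hrr := Hr (b (u * sin v)) hb). fold (rr (b (u * sin v))) in hrr.
      assert (hqp := q_pos _ hb).
      assert (E : sin v * pi1 (u * sin v) = (1 - rr (b (u * sin v))) * q (b (u * sin v)) / u).
      { rewrite <- hup. field. lra. }
      rewrite E, Rminus_0_r.
      assert (0 <= (1 - rr (b (u * sin v))) * q (b (u * sin v)) / u).
      { apply Rdiv_le_0_compat; try lra. apply Rmult_le_pos; lra. }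
      rewrite Rabs_pos_eq by auto.
      apply (Rmult_lt_reg_r u); try lra. unfold Rdiv. rewrite Rmult_assoc, Rinv_l, Rmult_1_r by lra.
      assert ((1 - rr (b (u * sin v))) * q (b (u * sin v)) <= (1 + K) * q (b (u * sin v))).
      { apply Rmult_le_compat_r; lra. }
      assert ((1 + K) * q (b (u * sin v)) < (1 + K) * (eps * A / (2 * (1 + K)))).
      { apply Rmult_lt_compat_l; lra. }
      replace ((1 + K) * (eps * A / (2 * (1 + K)))) with (eps * (A / 2)) in * by (field; lra).
      assert (eps * (A/2) < eps * u) by (apply Rmult_lt_compat_l; [apply cond_pos|lra]).
      lra.
  - assert (htp : 0 < t) by lra.
    assert (hst : 0 < sin t) by (apply sin_gt_0; lra).
    assert (hr := usin_range M A t hA hst).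
    apply continuity_2d_pt_ext_loc with (fun u v => sin v * pi1 (u * sin v)).
    + set (del := Rmin (Rmin t (PI / 2)) (Rmin A (a M - A))).
      assert (hdel : 0 < del) by (unfold del; apply Rmin_glb_lt; apply Rmin_glb_lt; lra).
      assert (hd1 : del <= t) by (unfold del; eapply Rle_trans; apply Rmin_l).
      assert (hd2 : del <= PI / 2) by (unfold del; eapply Rle_trans; [apply Rmin_l|apply Rmin_r]).
      assert (hd3 : del <= A) by (unfold del; eapply Rle_trans; [apply Rmin_r|apply Rmin_l]).
      assert (hd4 : del <= a M - A) by (unfold del; eapply Rle_trans; apply Rmin_r).
      exists (mkposreal _ hdel). intros u v hu hv. simpl in hu, hv.
      apply Rabs_lt_between' in hu. apply Rabs_lt_between' in hv.
      symmetry. apply (D_pos M); try lra. apply sin_gt_0; lra.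
    + apply continuity_2d_pt_mult.
      * apply (continuity_1d_2d_pt_comp sin (fun u v => v)). apply continuity_sin.
        apply continuity_2d_pt_id2.
      * apply (continuity_1d_2d_pt_comp pi1 (fun u v => u * sin v)).
        apply c2p. apply (pi1_cont M); auto.
        apply continuity_2d_pt_mult. apply continuity_2d_pt_id1.
        apply (continuity_1d_2d_pt_comp sin (fun u v => v)). apply continuity_sin.
        apply continuity_2d_pt_id2.
Qed.

Definition PP A := RInt (fun th => p (A * sin th)) 0 (PI / 2).

Lemma Asin_le A th : 0 <= A -> A * sin th <= A.
Proof.
  intro h. assert (sin th <= 1) by apply SIN_bound.
  rewrite <- (Rmult_1_r A) at 2. apply Rmult_le_compat_l; lra.
Qed.

Lemma psih_cont M A th : 0 <= M -> 0 < A < a M -> continuous (fun t => p (A * sin t)) th.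
Proof.
  intros hM hA. apply (ccomp (fun t => A * sin t) p).
  apply cmul. apply cconst. apply continuous_sin.
  apply (p_cont M); auto. assert (h := Asin_le A th). lra.
Qed.

Lemma P_derive M A : 0 <= M -> 0 < A < a M ->
  is_derive PP A (RInt (fun th => sin th * pi1 (A * sin th)) 0 (PI / 2)).
Proof.
  intros hM hA. assert (hpi := PI2_pos).
  assert (H := is_derive_RInt_param (fun u th => p (u * sin th)) 0 (PI/2) A).
  rewrite Rmin_left, Rmax_right in H by lra.
  assert (E : RInt (fun t => Derive (fun u => p (u * sin t)) A) 0 (PI/2) =
              RInt (fun th => sin th * pi1 (A * sin th)) 0 (PI / 2)).
  { apply RInt_ext. rewrite Rmin_left, Rmax_right by lra. intros t ht.
    apply (D_pos M); auto. apply sin_gt_0; lra. }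
  rewrite <- E. unfold PP. apply H.
  - apply (loc_intro A _ (Rmin A (a M - A))). apply Rmin_glb_lt; lra.
    intros y hy t ht. apply Rabs_lt_between' in hy.
    assert (Rmin A (a M - A) <= A) by apply Rmin_l.
    assert (Rmin A (a M - A) <= a M - A) by apply Rmin_r.
    assert (hs : 0 <= sin t) by (apply sin_ge_0; lra).
    destruct hs as [hs|hs].
    + eexists. apply (D_is M); auto; lra.
    + eexists. apply D_is0; lra.
  - intros t ht. apply (D_cont2 M); auto.
  - apply (loc_intro A _ (Rmin A (a M - A))). apply Rmin_glb_lt; lra.
    intros y hy. apply Rabs_lt_between' in hy.
    assert (Rmin A (a M - A) <= A) by apply Rmin_l.
    assert (Rmin A (a M - A) <= a M - A) by apply Rmin_r.
    apply exRc. intros z hz. apply (psih_cont M); lra.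
Qed.

Lemma pi1_neg u : u <= 0 -> pi1 u = pi1 0.
Proof. intro h. unfold pi1. rewrite (b_neg u), (b_neg 0); auto; lra. Qed.
Lemma beta_neg u : u <= 0 -> beta u = beta 0.
Proof. intro h. unfold beta. rewrite (b_neg u), (b_neg 0); auto; lra. Qed.

Lemma cont_negside (F : R -> R) A th : 0 < A -> (forall u, u <= 0 -> F u = F 0) -> sin th < 0 ->
  continuous (fun t => F (A * sin t)) th.
Proof.
  intros hA hF hs. apply continuous_ext_loc with (fun _ => F 0).
  eapply filter_imp; [|apply (locally_sin_neg th hs)]. intros t ht. simpl.
  symmetry. apply hF. assert (0 <= A * - sin t) by (apply Rmult_le_pos; lra). lra.
  apply cconst.
Qed.

Definition Fpi A th := sin th * pi1 (A * sin th).
Definition psif A th := A * (1 - cos th) * beta (A * sin th).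

Lemma one_m_cos th : 0 <= cos th -> 0 <= 1 - cos th <= sin th ^ 2.
Proof.
  intro hc. assert (h := sin2_cos2 th). unfold Rsqr in h. assert (cos th <= 1) by apply COS_bound.
  split. lra. simpl. rewrite Rmult_1_r.
  assert ((1 - cos th) * 1 <= (1 - cos th) * (1 + cos th)) by (apply Rmult_le_compat_l; lra).
  nra.
Qed.

Lemma Fpi_cont M A th : 0 <= M -> 0 < A < a M -> - PI < th < PI -> continuous (Fpi A) th.
Proof.
  intros hM hA hth. unfold Fpi. assert (hpi1 := PI2_1).
  destruct (Rtotal_order th 0) as [h|[h|h]].
  - apply cmul. apply continuous_sin. apply cont_negside. lra. apply pi1_neg.
    apply sin_lt_0_var; lra.
  - subst th. apply cont_at0 with (fun t => sin t * pi1 0).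
    rewrite sin_0; ring. apply cmul. apply continuous_sin. apply cconst. rewrite sin_0; ring.
    intros t ht. rewrite pi1_neg; auto. assert (sin t < 0) by (apply sin_lt_0_var; lra).
    assert (0 <= A * - sin t) by (apply Rmult_le_pos; lra). lra.
    intros eps heps.
    assert (hK : 0 < 1 + K) by lra.
    assert (hc : 0 < eps * A / (1 + K)) by (apply Rdiv_lt_0_compat; [apply Rmult_lt_0_compat|]; lra).
    destruct (qb_lim _ hc) as [d [hd Hd']].
    exists (Rmin (PI/2) (d / A)). split. apply Rmin_glb_lt. apply PI2_pos. apply Rdiv_lt_0_compat; lra.
    intros t ht.
    assert (Rmin (PI/2) (d / A) <= PI/2) by apply Rmin_l.
    assert (Rmin (PI/2) (d / A) <= d / A) by apply Rmin_r.
    assert (hs : 0 < sin t) by (apply sin_gt_0; assert (h := PI2_pos); lra).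
    destruct (usin_range M A t hA hs) as [hw1 hw2].
    assert (hw3 : A * sin t < d).
    { assert (sin t <= t) by (apply sin_le_id; lra).
      assert (A * sin t <= A * t) by (apply Rmult_le_compat_l; lra).
      assert (A * t < A * (d / A)) by (apply Rmult_lt_compat_l; lra).
      replace (A * (d / A)) with d in * by (field; lra). lra. }
    destruct (Hd' (A * sin t)) as [hb hq]. lra.
    assert (hup := u_pi1 M (A * sin t) hM ltac:(lra)).
    assert (hrr := Hr (b (A * sin t)) hb). fold (rr (b (A * sin t))) in hrr.
    assert (hqp := q_pos _ hb).
    assert (E : sin t * pi1 (A * sin t) = (1 - rr (b (A * sin t))) * q (b (A * sin t)) / A).
    { rewrite <- hup. field. lra. }
    rewrite E.
    assert (0 <= (1 - rr (b (A * sin t))) * q (b (A * sin t)) / A).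
    { apply Rdiv_le_0_compat; try lra. apply Rmult_le_pos; lra. }
    rewrite Rabs_pos_eq by auto.
    apply (Rmult_lt_reg_r A); try lra. unfold Rdiv. rewrite Rmult_assoc, Rinv_l, Rmult_1_r by lra.
    assert ((1 - rr (b (A * sin t))) * q (b (A * sin t)) <= (1 + K) * q (b (A * sin t))).
    { apply Rmult_le_compat_r; lra. }
    assert ((1 + K) * q (b (A * sin t)) < (1 + K) * (eps * A / (1 + K))).
    { apply Rmult_lt_compat_l; lra. }
    replace ((1 + K) * (eps * A / (1 + K))) with (eps * A) in * by (field; lra).
    lra.
  - apply cmul. apply continuous_sin.
    assert (hs : 0 < sin th) by (apply sin_gt_0; lra).
    apply (ccomp (fun t => A * sin t) pi1). apply cmul. apply cconst. apply continuous_sin.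
    apply (pi1_cont M); auto. apply usin_range; auto.
Qed.

Lemma psif_cont M A th : 0 <= M -> 0 < A < a M -> - PI < th < PI -> continuous (psif A) th.
Proof.
  intros hM hA hth. unfold psif. assert (hpi1 := PI2_1).
  destruct (Rtotal_order th 0) as [h|[h|h]].
  - apply cmul. apply cmul. apply cconst. apply cminus. apply cconst. apply continuous_cos.
    apply cont_negside. lra. apply beta_neg.
    apply sin_lt_0_var; lra.
  - subst th. apply cont_at0 with (fun t => A * (1 - cos t) * beta 0).
    rewrite cos_0; ring. apply cmul. apply cmul. apply cconst. apply cminus. apply cconst.
    apply continuous_cos. apply cconst. rewrite cos_0; ring.
    intros t ht. rewrite beta_neg; auto. assert (sin t < 0) by (apply sin_lt_0_var; lra).
    assert (0 <= A * - sin t) by (apply Rmult_le_pos; lra). lra.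
    intros eps heps.
    assert (hc : 0 < eps * A / K) by (apply Rdiv_lt_0_compat; [apply Rmult_lt_0_compat|]; lra).
    destruct (qb_lim _ hc) as [d [hd Hd']].
    exists (Rmin (PI/2) (d / A)). split. apply Rmin_glb_lt. apply PI2_pos. apply Rdiv_lt_0_compat; lra.
    intros t ht.
    assert (Rmin (PI/2) (d / A) <= PI/2) by apply Rmin_l.
    assert (Rmin (PI/2) (d / A) <= d / A) by apply Rmin_r.
    assert (hs : 0 < sin t) by (apply sin_gt_0; assert (h := PI2_pos); lra).
    assert (hcs : 0 <= cos t) by (apply cos_ge_0; lra).
    destruct (usin_range M A t hA hs) as [hw1 hw2].
    assert (hw3 : A * sin t < d).
    { assert (sin t <= t) by (apply sin_le_id; lra).
      assert (A * sin t <= A * t) by (apply Rmult_le_compat_l; lra).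
      assert (A * t < A * (d / A)) by (apply Rmult_lt_compat_l; lra).
      replace (A * (d / A)) with d in * by (field; lra). lra. }
    destruct (Hd' (A * sin t)) as [hb hq]. lra.
    assert (hup := u2_beta M (A * sin t) hM ltac:(lra)).
    assert (hrr := Hr (b (A * sin t)) hb). fold (rr (b (A * sin t))) in hrr.
    assert (hqp := q_pos _ hb).
    assert (hom := one_m_cos t hcs).
    assert (E : Rabs (A * (1 - cos t) * beta (A * sin t)) <= Rabs (rr (b (A * sin t))) * q (b (A * sin t)) / A).
    { replace (Rabs (rr (b (A * sin t))) * q (b (A * sin t))) with (Rabs (A * sin t * (A * sin t) * beta (A * sin t))).
      2: { rewrite hup. rewrite Rabs_mult, (Rabs_pos_eq (q _)); lra. }
      rewrite !Rabs_mult, (Rabs_pos_eq A), (Rabs_pos_eq (1 - cos t)), (Rabs_pos_eq (sin t)) by lra.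
      unfold Rdiv. replace (A * sin t * (A * sin t) * Rabs (beta (A * sin t)) * / A) with
        (A * (sin t ^ 2) * Rabs (beta (A * sin t))) by (field; lra).
      apply Rmult_le_compat_r. apply Rabs_pos. apply Rmult_le_compat_l; lra. }
    eapply Rle_lt_trans; [exact E|].
    apply (Rmult_lt_reg_r A); try lra. unfold Rdiv. rewrite Rmult_assoc, Rinv_l, Rmult_1_r by lra.
    assert (Rabs (rr (b (A * sin t))) <= K) by (apply Rabs_le; lra).
    assert (Rabs (rr (b (A * sin t))) * q (b (A * sin t)) <= K * q (b (A * sin t))).
    { apply Rmult_le_compat_r; lra. }
    assert (K * q (b (A * sin t)) < K * (eps * A / K)) by (apply Rmult_lt_compat_l; lra).
    replace (K * (eps * A / K)) with (eps * A) in * by (field; lra).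
    lra.
  - assert (hs : 0 < sin th) by (apply sin_gt_0; lra).
    apply cmul. apply cmul. apply cconst. apply cminus. apply cconst. apply continuous_cos.
    apply (ccomp (fun t => A * sin t) beta). apply cmul. apply cconst. apply continuous_sin.
    apply (beta_cont M); auto. apply usin_range; auto.
Qed.

Definition Psi0 A th := (1 - cos th) / Derive a (b (A * sin th)).

Lemma Psi0_derive M A th : 0 <= M -> 0 < A < a M -> 0 < sin th ->
  is_derive (Psi0 A) th (Fpi A th + psif A th).
Proof.
  intros hM hA hs. destruct (usin_range M A th hA hs) as [hu1 hu2].
  set (u := A * sin th) in *. set (T := b u).
  assert (hT : 0 < T) by (apply (b_pos M); lra).
  assert (haT : a T = u) by (apply (a_b M); lra).
  assert (hD : 0 < Derive a T) by auto.
  assert (h1 : is_derive (fun th => A * sin th) th (A * cos th)) by (auto_derive; auto; ring).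
  assert (h2 := is_derive_comp b (fun th => A * sin th) th _ _ (b_derive M u hM ltac:(lra)) h1).
  assert (h3 : is_derive (Derive a) T (Derive_n a 2 T)).
  { destruct (Hdd T hT) as [l hl]. assert (Derive (Derive a) T = l) by (apply is_derive_unique; auto).
    change (Derive_n a 2 T) with (Derive (Derive a) T). rewrite H. exact hl. }
  assert (h4 := is_derive_comp (Derive a) (fun th => b (A * sin th)) th _ _ h3 h2).
  assert (h5 : is_derive (fun th => 1 - cos th) th (sin th)) by (auto_derive; auto; ring).
  assert (h6 := is_derive_div _ _ th _ _ h5 h4 ltac:(simpl; fold u; fold T; lra)).
  unfold Psi0. apply (der_eq _ _ _ _ h6).
  unfold Fpi, psif, pi1, beta, rr, scal; simpl; unfold mult; simpl. fold u. fold T. rewrite haT.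
  assert (hsc := sin2_cos2 th). unfold Rsqr in hsc. unfold u.
  field_simplify_eq; [|lra].
  assert (E : sin th ^ 2 = 1 - cos th ^ 2) by (simpl; lra). rewrite E. ring.
Qed.

Lemma Psi0_lim M A : 0 <= M -> 0 < A < a M -> filterlim (Psi0 A) (at_right 0) (locally 0).
Proof.
  intros hM hA. apply filterlim_locally. intro eps.
  assert (hc : 0 < eps * A) by (apply Rmult_lt_0_compat; [apply cond_pos|lra]).
  destruct (qb_lim _ hc) as [d [hd Hd']].
  assert (hd2 : 0 < Rmin (PI/2) (d / A)).
  { apply Rmin_glb_lt. apply PI2_pos. apply Rdiv_lt_0_compat; lra. }
  apply (loc_intro 0 _ _ hd2). intros t ht htp. apply ballR. rewrite Rminus_0_r.
  rewrite Rminus_0_r, Rabs_pos_eq in ht by lra.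
  assert (Rmin (PI/2) (d / A) <= PI/2) by apply Rmin_l.
  assert (Rmin (PI/2) (d / A) <= d / A) by apply Rmin_r.
  assert (hs : 0 < sin t) by (apply sin_gt_0; assert (h := PI2_pos); lra).
  assert (hcs : 0 <= cos t) by (apply cos_ge_0; lra).
  destruct (usin_range M A t hA hs) as [hw1 hw2].
  assert (hw3 : A * sin t < d).
  { assert (sin t <= t) by (apply sin_le_id; lra).
    assert (A * sin t <= A * t) by (apply Rmult_le_compat_l; lra).
    assert (A * t < A * (d / A)) by (apply Rmult_lt_compat_l; lra).
    replace (A * (d / A)) with d in * by (field; lra). lra. }
  destruct (Hd' (A * sin t)) as [hb hq]. lra.
  assert (hab : a (b (A * sin t)) = A * sin t) by (apply (a_b M); lra).
  assert (hD := Hdpos _ hb).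
  assert (hom := one_m_cos t hcs).
  assert (sin t <= 1) by apply SIN_bound.
  unfold Psi0. rewrite Rabs_pos_eq by (apply Rdiv_le_0_compat; lra).
  unfold q in hq. rewrite hab in hq.
  apply Rle_lt_trans with (sin t ^ 2 / Derive a (b (A * sin t))).
  { apply Rmult_le_compat_r. left; apply Rinv_0_lt_compat; auto. lra. }
  apply Rle_lt_trans with (A * sin t / Derive a (b (A * sin t)) / A).
  { replace (A * sin t / Derive a (b (A * sin t)) / A) with (sin t / Derive a (b (A * sin t))) by (field; lra).
    unfold Rdiv. apply Rmult_le_compat_r. left; apply Rinv_0_lt_compat; auto. simpl.
    rewrite Rmult_1_r. rewrite <- (Rmult_1_r (sin t)) at 3. apply Rmult_le_compat_l; lra. }
  apply (Rmult_lt_reg_r A); try lra. unfold Rdiv at 1. rewrite Rmult_assoc, Rinv_l, Rmult_1_r by lra.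
  exact hq.
Qed.

Lemma FTC M A : 0 <= M -> 0 < A < a M ->
  RInt (Fpi A) 0 (PI / 2) + RInt (psif A) 0 (PI / 2) = / Derive a (b A).
Proof.
  intros hM hA. assert (hpi := PI2_1). assert (hpi0 := PI2_pos).
  set (F := fun th => Fpi A th + psif A th).
  assert (hcF : forall th, - PI < th < PI -> continuous F th).
  { intros th hth. unfold F. apply cplus. apply (Fpi_cont M); auto. apply (psif_cont M); auto. }
  assert (hex : forall (f : R -> R) z w, (forall th, - PI < th < PI -> continuous f th) ->
             -1 < z < PI -> -1 < w < PI -> ex_RInt f z w).
  { intros f z w hf hz hw. apply exRc. intros x hx.
    assert (Rmin z w <= z) by apply Rmin_l. assert (Rmin z w <= w) by apply Rmin_r.
    assert (z <= Rmax z w) by apply Rmax_l. assert (w <= Rmax z w) by apply Rmax_r.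
    assert (Rmin z w >= z \/ Rmin z w >= w) by (unfold Rmin; destruct Rle_dec; lra).
    assert (Rmax z w <= z \/ Rmax z w <= w) by (unfold Rmax; destruct Rle_dec; lra).
    apply hf. lra. }
  assert (hF1 : forall th, - PI < th < PI -> continuous (Fpi A) th) by (intros; apply (Fpi_cont M); auto).
  assert (hF2 : forall th, - PI < th < PI -> continuous (psif A) th) by (intros; apply (psif_cont M); auto).
  rewrite <- (RIu F 0 (PI/2) (RInt (Fpi A) 0 (PI / 2) + RInt (psif A) 0 (PI / 2))).
  2: { apply (is_RInt_plus (Fpi A) (psif A)); apply RIc; apply hex; auto; lra. }
  set (E := fun z => RInt F z (PI / 2)).
  change (E 0 = / Derive a (b A)).
  assert (hE : continuous E 0).
  { apply (continuous_RInt_2 F 0 (PI/2) E). apply (loc_intro 0 _ 1); try lra.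
    intros y hy. apply Rabs_lt_between' in hy. apply RIc. apply hex; auto; lra. }
  assert (hE2 : forall z, 0 < z < PI / 2 -> E z = Psi0 A (PI / 2) - Psi0 A z).
  { intros z hz. unfold E. apply RIu.
    apply (is_RInt_derive (Psi0 A) F z (PI/2)).
    - intros x hx. rewrite Rmin_left, Rmax_right in hx by lra. apply (Psi0_derive M); auto.
      apply sin_gt_0; lra.
    - intros x hx. rewrite Rmin_left, Rmax_right in hx by lra. apply hcF; lra. }
  assert (l1 := right_of_cont E 0 hE).
  assert (l2 : filterlim E (at_right 0) (locally (Psi0 A (PI / 2) - 0))).
  { apply filterlim_ext_loc with (fun z => Psi0 A (PI / 2) - Psi0 A z).
    apply (loc_intro 0 _ (PI / 2)); auto. intros y hy hy0. rewrite hE2; auto.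
    apply Rabs_lt_between' in hy. lra.
    apply (filterlim_comp _ _ _ (Psi0 A) (fun x => Psi0 A (PI / 2) - x) (at_right 0) (locally 0)).
    apply (Psi0_lim M); auto.
    apply (cminus (fun _ => Psi0 A (PI / 2)) (fun x => x)). apply cconst. apply cid. }
  assert (U := filterlim_locally_unique (F := at_right 0) E _ _ l1 l2).
  rewrite U. unfold Psi0. rewrite cos_PI2, sin_PI2, Rmult_1_r. rewrite !Rminus_0_r. unfold Rdiv. rewrite Rmult_1_l. reflexivity.
Qed.

Definition hh tau t := a t / sqrt (a tau ^ 2 - a t ^ 2).
Definition fk tau t := Derive_n a 2 t / (Derive a t) ^ 2 *
  (sqrt (a tau ^ 2 - a 0 ^ 2) / sqrt (a tau ^ 2 - a t ^ 2) - 1).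

Lemma gg_facts tau th : 0 < tau -> 0 < th < PI / 2 ->
  0 < gg tau th /\ a (gg tau th) = a tau * sin th /\ 0 < cos th /\ 0 < sin th.
Proof.
  intros ht hth. assert (hs : 0 < sin th) by (apply sin_gt_0; assert (h := PI2_pos); lra).
  assert (hc : 0 < cos th) by (apply cos_gt_0; lra).
  destruct (u_range tau th ht hs) as [h1 h2].
  split. apply (b_pos (tau+1)); lra. split. apply (a_b (tau+1)); lra. auto.
Qed.

Lemma psih_id tau th : 0 < tau -> 0 < th < PI / 2 ->
  p (a tau * sin th) = dgg tau th * hh tau (gg tau th).
Proof.
  intros ht hth. destruct (gg_facts tau th ht hth) as [h1 [h2 [h3 h4]]].
  assert (hA : 0 < a tau) by (apply a_pos; lra).
  assert (hD := Hdpos _ h1).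
  unfold dgg, hh. fold (gg tau th). rewrite h2. rewrite sqrt_cos by lra.
  unfold p. fold (gg tau th). unfold q. rewrite h2.
  assert (a tau * cos th <> 0) by (apply Rgt_not_eq; apply Rmult_lt_0_compat; auto).
  field; repeat split; lra.
Qed.

Lemma psif_id tau th : 0 < tau -> 0 < th < PI / 2 ->
  psif (a tau) th = dgg tau th * fk tau (gg tau th).
Proof.
  intros ht hth. destruct (gg_facts tau th ht hth) as [h1 [h2 [h3 h4]]].
  assert (hA : 0 < a tau) by (apply a_pos; lra).
  assert (hD := Hdpos _ h1).
  unfold dgg, fk, psif, beta. fold (gg tau th). rewrite h2. rewrite sqrt_cos by lra.
  rewrite Ha0. replace (a tau ^ 2 - 0 ^ 2) with (a tau ^ 2) by ring. rewrite sqrt_pow2 by lra.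
  assert (a tau * cos th <> 0) by (apply Rgt_not_eq; apply Rmult_lt_0_compat; auto).
  field; repeat split; lra.
Qed.

Lemma hh_cont tau t : 0 < tau -> - tau < t < tau -> continuous (hh tau) t.
Proof.
  intros ht htt. unfold hh.
  assert (hlt : a t < a tau) by (rewrite a_abs; apply Hinc; [apply Rabs_pos| apply Rabs_def1; lra]).
  assert (h0 := a_nonneg t).
  apply cdiv. apply a_cont. apply continuous_sqrt_comp. apply cminus. apply cconst.
  apply cpow. apply a_cont.
  apply Rgt_not_eq. apply sqrt_lt_R0. nra.
Qed.

Lemma hh_pos tau t : 0 < tau -> - tau < t < tau -> t <> 0 -> 0 < hh tau t.
Proof.
  intros ht htt hne. unfold hh.
  assert (hlt : a t < a tau) by (rewrite a_abs; apply Hinc; [apply Rabs_pos| apply Rabs_def1; lra]).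
  assert (h0 := a_pos t hne).
  apply Rdiv_lt_0_compat; auto. apply sqrt_lt_R0. nra.
Qed.

Lemma fk_cont tau t : 0 < tau -> 0 < t < tau -> continuous (fk tau) t.
Proof.
  intros ht htt. unfold fk.
  assert (hlt : a t < a tau) by (apply Hinc; lra).
  assert (h0 := a_nonneg t).
  apply cmul. apply cdiv. apply Hc2; lra. apply cpow. apply cont_Da; lra.
  apply pow_nonzero, Rgt_not_eq, Hdpos; lra.
  apply cminus; [|apply cconst]. apply cdiv. apply cconst.
  apply continuous_sqrt_comp. apply cminus. apply cconst.
  apply cpow. apply a_cont.
  apply Rgt_not_eq. apply sqrt_lt_R0. nra.
Qed.

Lemma hh_ex tau x y : 0 < tau -> - tau < x < tau -> - tau < y < tau -> ex_RInt (hh tau) x y.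
Proof.
  intros ht hx hy. apply exRc. intros z hz. apply hh_cont; auto.
  assert (Rmin x y >= x \/ Rmin x y >= y) by (unfold Rmin; destruct Rle_dec; lra).
  assert (Rmax x y <= x \/ Rmax x y <= y) by (unfold Rmax; destruct Rle_dec; lra).
  lra.
Qed.

Lemma psih_ex tau x y : 0 < tau -> ex_RInt (fun th => p (a tau * sin th)) x y.
Proof.
  intros ht. apply exRc. intros z hz. apply (psih_cont (tau+1)). lra.
  split. apply a_pos; lra. apply aM; auto.
Qed.

Lemma HY tau y : 0 < tau -> 0 < y < tau ->
  RInt (hh tau) 0 y = RInt (fun th => p (a tau * sin th)) 0 (Th tau y).
Proof.
  intros ht hy. set (psih := fun th => p (a tau * sin th)).
  assert (l1 : filterlim (fun x => RInt (hh tau) x y) (at_right 0) (locally (RInt (hh tau) 0 y))).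
  { apply right_of_cont with (f := fun x => RInt (hh tau) x y).
    apply (continuous_RInt_2 (hh tau) 0 y). apply (loc_intro 0 _ tau ht).
    intros z hz. apply Rabs_lt_between' in hz. apply RIc. apply hh_ex; lra. }
  assert (l2 : filterlim (fun x => RInt (hh tau) x y) (at_right 0) (locally (RInt psih 0 (Th tau y)))).
  { apply filterlim_ext_loc with (fun x => RInt psih (Th tau x) (Th tau y)).
    apply (loc_intro 0 _ y); try lra. intros z hz hz0. apply Rabs_lt_between' in hz.
    symmetry. apply RIu. apply subst; try lra. intros t0 ht0. apply hh_cont; lra.
    intros th hth. unfold psih. apply psih_id; auto.
    apply (filterlim_comp _ _ _ (Th tau) (fun z => RInt psih z (Th tau y)) (at_right 0) (locally 0)).
    apply Th_lim0; auto.
    apply (continuous_RInt_2 psih 0 (Th tau y)). apply (loc_intro 0 _ 1); try lra.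
    intros z hz. apply RIc. apply psih_ex; auto. }
  exact (filterlim_locally_unique (F := at_right 0) _ _ _ l1 l2).
Qed.

Lemma rhoM_val tau s : 0 < tau -> - tau < s < tau ->
  is_RInt_gen (hh tau) (at_right s) (at_left tau) (PP (a tau) - RInt (hh tau) 0 s).
Proof.
  intros ht hs. set (psih := fun th => p (a tau * sin th)).
  apply (AL (hh tau) (fun y => RInt (hh tau) 0 y)); try lra.
  - intros x y hxy hy. apply (isR_eq _ _ _ (RInt (hh tau) x y)).
    apply RIc. apply hh_ex; lra.
    rewrite <- (RCh (hh tau) 0 x y) by (apply hh_ex; lra). apply Rsimp2.
  - apply right_of_cont with (f := fun y => RInt (hh tau) 0 y).
    apply (continuous_RInt_1 (hh tau) 0 s). apply (loc_intro s _ (Rmin (s + tau) (tau - s))).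
    apply Rmin_glb_lt; lra.
    intros z hz. apply Rabs_lt_between' in hz.
    assert (Rmin (s + tau) (tau - s) <= s + tau) by apply Rmin_l.
    assert (Rmin (s + tau) (tau - s) <= tau - s) by apply Rmin_r.
    apply RIc. apply hh_ex; lra.
  - apply filterlim_ext_loc with (fun y => RInt psih 0 (Th tau y)).
    apply (loc_intro tau _ tau ht). intros z hz hz0. apply Rabs_lt_between' in hz.
    symmetry. apply HY; lra.
    apply (filterlim_comp _ _ _ (Th tau) (fun z => RInt psih 0 z) (at_left tau) (locally (PI/2))).
    apply Th_limtau; auto.
    apply (continuous_RInt_1 psih 0 (PI/2)). apply (loc_intro (PI/2) _ 1); try lra.
    intros z hz. apply RIc. apply psih_ex; auto.
Qed.

Lemma fpos_val tau : 0 < tau ->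
  is_RInt_gen (fk tau) (at_right 0) (at_left tau) (RInt (psif (a tau)) 0 (PI / 2)).
Proof.
  intros ht.
  assert (hA : 0 < a tau < a (tau + 1)) by (split; [apply a_pos; lra|apply aM; auto]).
  assert (hcf : forall th, - PI < th < PI -> continuous (psif (a tau)) th).
  { intros; apply (psif_cont (tau + 1)); auto; lra. }
  assert (hpi := PI2_1).
  assert (hex : forall z w, -1 < z < PI -> -1 < w < PI -> ex_RInt (psif (a tau)) z w).
  { intros z w hz hw. apply exRc. intros x hx.
    assert (Rmin z w >= z \/ Rmin z w >= w) by (unfold Rmin; destruct Rle_dec; lra).
    assert (Rmax z w <= z \/ Rmax z w <= w) by (unfold Rmax; destruct Rle_dec; lra).
    apply hcf. lra. }
  set (G := fun y => RInt (psif (a tau)) 0 (Th tau y)).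
  replace (RInt (psif (a tau)) 0 (PI / 2)) with (RInt (psif (a tau)) 0 (PI / 2) - G 0).
  2: { unfold G. rewrite Th_0, Rpt. ring. }
  apply (AL (fk tau) G); try lra.
  - intros x y hxy hy. unfold G.
    assert (hx1 := Th_strict tau x ht ltac:(lra)).
    assert (hy1 := Th_strict tau y ht ltac:(lra)).
    apply (isR_eq _ _ _ (RInt (psif (a tau)) (Th tau x) (Th tau y))).
    2: { rewrite <- (RCh (psif (a tau)) 0 (Th tau x) (Th tau y)) by (apply hex; lra). apply Rsimp2. }
    apply subst; try lra. intros t0 ht0. apply fk_cont; lra.
    intros th hth. apply psif_id; auto.
  - unfold G. rewrite Th_0.
    apply (filterlim_comp _ _ _ (Th tau) (fun z => RInt (psif (a tau)) 0 z) (at_right 0) (locally 0)).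
    apply Th_lim0; auto.
    apply (continuous_RInt_1 (psif (a tau)) 0 0). apply (loc_intro 0 _ 1); try lra.
    intros z hz. apply Rabs_lt_between' in hz. apply RIc. apply hex; lra.
  - apply (filterlim_comp _ _ _ (Th tau) (fun z => RInt (psif (a tau)) 0 z) (at_left tau) (locally (PI/2))).
    apply Th_limtau; auto.
    apply (continuous_RInt_1 (psif (a tau)) 0 (PI/2)). apply (loc_intro (PI/2) _ (1/2)); try lra.
    intros z hz. apply Rabs_lt_between' in hz. apply RIc. apply hex; lra.
Qed.

Lemma rhoM_eq tau : 0 < tau -> rhoM a tau = PP (a tau).
Proof.
  intro ht. unfold rhoM, impint. change (fun t => a t / sqrt (a tau ^ 2 - a t ^ 2)) with (hh tau).
  rewrite (RGu _ _ _ _ (rhoM_val tau 0 ht ltac:(lra))). rewrite Rpt. ring.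
Qed.

Lemma fpos_eq tau : 0 < tau -> fpos a tau 0 = RInt (psif (a tau)) 0 (PI / 2).
Proof.
  intro ht. unfold fpos, impint.
  change (fun t => dda a t / da a t ^ 2 * (sqrt (a tau ^ 2 - a 0 ^ 2) / sqrt (a tau ^ 2 - a t ^ 2) - 1))
    with (fk tau).
  apply RGu. apply fpos_val; auto.
Qed.

Lemma t0_zero tau rho : 0 < tau -> Rabs rho = rhoM a tau -> t0 a tau rho = 0.
Proof.
  intros ht hr. unfold t0.
  set (P := fun s => - tau < s < tau /\
       Rabs rho = impint (fun t => a t / sqrt (a tau ^ 2 - a t ^ 2)) s tau).
  assert (HP : P (epsilon (inhabits 0) P)).
  { apply epsilon_spec. exists 0. split; [lra|]. rewrite hr. reflexivity. }
  set (s := epsilon (inhabits 0) P) in *.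
  destruct HP as [hs heq]. unfold impint in heq.
  change (fun t => a t / sqrt (a tau ^ 2 - a t ^ 2)) with (hh tau) in heq.
  rewrite (RGu _ _ _ _ (rhoM_val tau s ht hs)) in heq.
  rewrite hr, rhoM_eq in heq by auto.
  assert (hz : RInt (hh tau) 0 s = 0) by lra.
  destruct (Rtotal_order s 0) as [h|[h|h]]; auto; exfalso.
  - assert (h1 : 0 < RInt (hh tau) s 0).
    { apply RInt_gt_0; auto. intros x hx. apply hh_pos; lra.
      intros x hx. apply hh_cont; lra. }
    assert (h2 := RCh (hh tau) 0 s 0 ltac:(apply hh_ex; lra) ltac:(apply hh_ex; lra)).
    rewrite Rpt in h2. lra.
  - assert (h1 : 0 < RInt (hh tau) 0 s).
    { apply RInt_gt_0; auto. intros x hx. apply hh_pos; lra.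
      intros x hx. apply hh_cont; lra. }
    lra.
Qed.

Lemma main_tau tau : 0 < tau ->
  is_derive (rhoM a) tau (1 - Derive a tau * fpos a tau 0).
Proof.
  intro ht.
  assert (hA : 0 < a tau < a (tau + 1)) by (split; [apply a_pos; lra|apply aM; auto]).
  assert (H1 := P_derive (tau + 1) (a tau) ltac:(lra) hA).
  destruct (Hd tau ht) as [l hl].
  assert (hl' : Derive a tau = l) by (apply is_derive_unique; auto).
  assert (H2 := is_derive_comp PP a tau _ _ H1 hl).
  apply is_derive_ext_loc with (fun x => PP (a x)).
  { apply (loc_intro tau _ tau ht). intros y hy. apply Rabs_lt_between' in hy.
    symmetry; apply rhoM_eq; lra. }
  apply (der_eq _ _ _ _ H2).
  assert (hF := FTC (tau + 1) (a tau) ltac:(lra) hA).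
  rewrite b_a in hF by lra.
  rewrite fpos_eq by auto.
  unfold Fpi in hF. rewrite <- hl'.
  assert (hD := Hdpos tau ht).
  unfold scal; simpl; unfold mult; simpl.
  replace (RInt (fun th => sin th * pi1 (a tau * sin th)) 0 (PI / 2)) with
     (/ Derive a tau - RInt (psif (a tau)) 0 (PI / 2)) by lra.
  field. lra.
Qed.

Lemma rhoM_nonneg tau : 0 < tau -> 0 <= rhoM a tau.
Proof.
  intro ht. rewrite rhoM_eq by auto. unfold PP. apply RInt_ge_0.
  left; apply PI2_pos. apply psih_ex; auto.
  intros x hx. assert (hs : 0 < sin x) by (apply sin_gt_0; assert (h := PI2_1); lra).
  destruct (u_range tau x ht hs) as [h1 h2].
  unfold p. left. apply q_pos. apply (b_pos (tau + 1)); lra.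
Qed.

Lemma final tau : 0 < tau ->
    ex_derive (rhoM a) tau /\
    gtt a tau (rhoM a tau) + (Derive (rhoM a) tau) ^ 2 = 0 /\
    gtt a tau (- rhoM a tau) + (Derive (fun s => - rhoM a s) tau) ^ 2 = 0.
Proof.
  intro ht. assert (H := main_tau tau ht).
  assert (hD : Derive (rhoM a) tau = 1 - Derive a tau * fpos a tau 0) by (apply is_derive_unique; auto).
  assert (hn := rhoM_nonneg tau ht).
  assert (ht1 : t0 a tau (rhoM a tau) = 0) by (apply t0_zero; auto; apply Rabs_pos_eq; auto).
  assert (ht2 : t0 a tau (- rhoM a tau) = 0) by (apply t0_zero; auto; rewrite Rabs_Ropp; apply Rabs_pos_eq; auto).
  assert (hf : ffun a tau 0 = fpos a tau 0).
  { unfold ffun. destruct (Rle_dec 0 0); [reflexivity|lra]. }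
  split. exists (1 - Derive a tau * fpos a tau 0); auto.
  unfold gtt, da. rewrite ht1, ht2, hf, Derive_opp, hD. split; ring.
Qed.

End Main.

Lemma deriv_nonneg (a : R -> R) t l : (forall s u, 0 <= s -> s < u -> a s < a u) -> 0 < t ->
  is_derive a t l -> 0 <= l.
Proof.
  intros hinc ht H. apply is_derive_Reals in H.
  destruct (Rle_lt_dec 0 l) as [h|h]; auto. exfalso.
  destruct (H (- l / 2) ltac:(lra)) as [d hd].
  assert (hdp := cond_pos d).
  assert (h1 := hd (d / 2) ltac:(lra) ltac:(rewrite Rabs_pos_eq; lra)).
  assert (h2 : a t < a (t + d / 2)) by (apply hinc; lra).
  apply Rabs_lt_between' in h1.
  assert (0 < (a (t + d / 2) - a t) / (d / 2)) by (apply Rdiv_lt_0_compat; lra).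
  lra.
Qed.

Theorem theorem6p2 (a : R -> R)
  (Heven : forall t, a (- t) = a t)
  (Hsreg : strongly_regular_scale_factor a)
  (Hcase :
     (filterlim (da a) (at_right 0) (locally 0) /\
      exists eps, 0 < eps /\ forall t, 0 < t < eps -> 0 <= dda a t)
     \/
     (exists L, 0 < L /\ filterlim (da a) (at_right 0) (locally L)))
  (H3 : forall t, 0 < t -> ex_derive (Derive_n a 2) t)
  (HC : exists C, 0 < C /\ forall t, 0 < t ->
          Rabs (ddda a t * a t ^ 2 / (da a t) ^ 3) <= C) :
  forall tau, 0 < tau ->
    ex_derive (rhoM a) tau /\
    gtt a tau (rhoM a tau) + (Derive (rhoM a) tau) ^ 2 = 0 /\
    gtt a tau (- rhoM a tau) + (Derive (fun s => - rhoM a s) tau) ^ 2 = 0.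
Proof.
  intros tau ht.
  destruct Hsreg as [[Ha0 [Hinc [Hcont [Hder Hr1]]]] [K [HK HKr]]].
  apply (final a Ha0 Hinc Hcont Heven) with (K := K); auto.
  - intros t h; apply (Hder t h).
  - intros t h; apply (Hder t h).
  - intros t h; apply (Hder t h).
  - intros t h. destruct (Hr1 t h) as [hne _]. destruct (Hder t h) as [[l hl] _].
    assert (Derive a t = l) by (apply is_derive_unique; auto).
    assert (0 <= l) by (apply (deriv_nonneg a t); auto). unfold da in hne. lra.
  - intros t h. split. apply HKr; auto. apply Hr1; auto.
Qed.
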